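(* Let $X$ be a finite nonempty alphabet and $\mathcal{L}\subseteq 2^{X^*}$ a nontrivial, WP-recursive language family closed under finite unions, finite intersections and complementation. Let $(C,\mathbf{A})$ be a conditional classification problem with $\mathbf{A}=(A_1,\dots,A_k)$, $C$ recursive, and for each $1\le i\le k$: $A_i$ recursive and $A_i\notin\mathit{cclass}_1(C,\mathcal{L})$. Then there exists $\mathbf{B}=(B_1,\dots,B_k)$ with $\mathbf{B}\le\mathbf{A}$, $\mathbf{B}\in\mathit{ccore}_k(C,\mathcal{L})$, and each $B_i$ recursive.
   Context: $\mathcal{L}$ is nontrivial if $\emptyset,X^*\in\mathcal{L}$ and for all $Q\in\mathcal{L}$ and finite $E\subseteq X^*$ both $Q\cup E\in\mathcal{L}$ and $Q\setminus E\in\mathcal{L}$. $\mathcal{L}$ is WP-recursive if there is a surjection $e:\mathbb{N}_0\to\mathcal{L}$ such that the predicate ''$w\in e(i)$'' (for $i\in\mathbb{N}_0$, $w\in X^*$) is decidable uniformly in $i,w$. A classification problem is a vector $(A_1,\dots,A_k)$, $k\ge1$, of pairwise disjoint infinite subsets of $X^*$, of length $k$. A conditional classification problem is a pair $(C,\mathbf{A})$ with $C\subseteq X^*$, $\mathbf{A}$ a classification problem and $C$ disjoint from all components of $\mathbf{A}$. For vectors $\mathbf{B}=(B_1,\dots,B_m)$, $\mathbf{Q}=(Q_1,\dots,Q_k)$, $\mathbf{B}\le\mathbf{Q}$ means $1\le m\le k$ and there is an injective $\sigma:\{1,\dots,m\}\to\{1,\dots,k\}$ with $B_i\subseteq Q_{\sigma(i)}$.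 An $\mathcal{L}$-partition is a vector of pairwise disjoint members of $\mathcal{L}$ whose union is $X^*$. $\mathit{cclass}_k(C,\mathcal{L})$ is the set of classification problems $\mathbf{A}$ of length $k$ such that $(C,\mathbf{A})$ is a conditional classification problem and there is an $\mathcal{L}$-partition $(Q_0,Q_1,\dots,Q_k)$ with $C\subseteq Q_0$ and $\mathbf{A}\le(Q_1,\dots,Q_k)$ (a single set $A$ is identified with $(A)$). $\mathit{ccore}_k(C,\mathcal{L})$ is the set of classification problems $\mathbf{A}$ of length $k$ with $(C,\mathbf{A})$ a conditional classification problem such that every classification problem $\mathbf{A}'\le\mathbf{A}$ (any length $\ge1$) satisfies $\mathbf{A}'\notin\mathit{cclass}_{|\mathbf{A}'|}(C,\mathcal{L})$. *)

(* Defs.v *)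
From mathcomp Require Import all_boot.
Set Implicit Arguments. Unset Strict Implicit. Unset Printing Implicit Defensive.

Inductive recf : Type :=
| RZero
| RSucc
| RProj (i : nat)
| RComp (f : recf) (gs : seq recf)
| RPrec (f g : recf)
| RMin (f : recf).

Inductive eval : recf -> seq nat -> nat -> Prop :=
| eZero v : eval RZero v 0
| eSucc x v : eval RSucc (x :: v) x.+1
| eProj i v : i < size v -> eval (RProj i) v (nth 0 v i)
| eComp f gs v ys y : evals gs v ys -> eval f ys y -> eval (RComp f gs) v y
| ePrec0 f g v y : eval f v y -> eval (RPrec f g) (0 :: v) y
| ePrecS f g n v r y :
    eval (RPrec f g) (n :: v) r -> eval g (n :: r :: v) y ->
    eval (RPrec f g) (n.+1 :: v) y
| eMin f v n :
    eval f (n :: v) 0 ->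
    (forall m, m < n -> exists k, eval f (m :: v) k.+1) ->
    eval (RMin f) v n
with evals : seq recf -> seq nat -> seq nat -> Prop :=
| esNil v : evals [::] v [::]
| esCons g gs v y ys : eval g v y -> evals gs v ys -> evals (g :: gs) v (y :: ys).

Definition lang (X : finType) := seq X -> Prop.

(* standard bijective base-|X| numbering of words, used to feed words to
   recursive functions *)
Definition wcode (X : finType) (w : seq X) : nat :=
  foldr (fun x n => (enum_rank x).+1 + #|X| * n) 0 w.

Definition recursive (X : finType) (A : lang X) : Prop :=
  exists c : recf, forall w,
    (A w -> eval c [:: wcode w] 1) /\ (~ A w -> eval c [:: wcode w] 0).

Definition nontrivial (X : finType) (L : lang X -> Prop) : Prop :=
  [/\ L (fun _ => False), L (fun _ => True) &
      forall Q, L Q -> forall E : seq (seq X),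
        L (fun w => Q w \/ w \in E) /\ L (fun w => Q w /\ w \notin E)].

Definition WP_recursive (X : finType) (L : lang X -> Prop) : Prop :=
  exists e : nat -> lang X,
    [/\ (forall i, L (e i)), (forall Q, L Q -> exists i, e i = Q) &
        exists c : recf, forall i w,
          (e i w -> eval c [:: i; wcode w] 1) /\
          (~ e i w -> eval c [:: i; wcode w] 0)].

Definition closed_union (X : finType) (L : lang X -> Prop) : Prop :=
  forall Q R, L Q -> L R -> L (fun w => Q w \/ R w).
Definition closed_inter (X : finType) (L : lang X -> Prop) : Prop :=
  forall Q R, L Q -> L R -> L (fun w => Q w /\ R w).
Definition closed_compl (X : finType) (L : lang X -> Prop) : Prop :=
  forall Q, L Q -> L (fun w => ~ Q w).

Definition infinite_lang (X : finType) (A : lang X) : Prop :=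
  forall s : seq (seq X), exists w, A w /\ w \notin s.

Definition class_problem (X : finType) (k : nat) (A : 'I_k -> lang X) : Prop :=
  [/\ 1 <= k,
      (forall i j, i != j -> forall w, A i w -> A j w -> False) &
      (forall i, infinite_lang (A i))].

Definition cond_class_problem (X : finType) (C : lang X) (k : nat)
  (A : 'I_k -> lang X) : Prop :=
  class_problem A /\ (forall i w, C w -> A i w -> False).

Definition vle (X : finType) (m : nat) (B : 'I_m -> lang X) (k : nat)
  (Q : 'I_k -> lang X) : Prop :=
  (1 <= m <= k) /\
  exists sigma : 'I_m -> 'I_k, injective sigma /\
    forall i w, B i w -> Q (sigma i) w.

Definition L_partition (X : finType) (L : lang X -> Prop) (n : nat)
  (Q : 'I_n -> lang X) : Prop :=
  [/\ (forall i, L (Q i)),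
      (forall i j, i != j -> forall w, Q i w -> Q j w -> False) &
      (forall w, exists i, Q i w)].

Definition cclass (X : finType) (L : lang X -> Prop) (C : lang X) (k : nat)
  (A : 'I_k -> lang X) : Prop :=
  cond_class_problem C A /\
  exists Q : 'I_k.+1 -> lang X,
    [/\ L_partition L Q, (forall w, C w -> Q ord0 w) &
        vle A (fun i : 'I_k => Q (lift ord0 i))].

Definition ccore (X : finType) (L : lang X -> Prop) (C : lang X) (k : nat)
  (A : 'I_k -> lang X) : Prop :=
  cond_class_problem C A /\
  forall (m : nat) (A' : 'I_m -> lang X),
    class_problem A' -> vle A' A -> ~ cclass L C A'.

(* Main.v *)
Require Import Defs.
From mathcomp Require Import all_boot.
From Stdlib Require Import Classical ClassicalEpsilon.
Set Implicit Arguments. Unset Strict Implicit. Unset Printing Implicit Defensive.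

Definition rc (n : nat) (f : recf) (F : seq nat -> nat) :=
  forall v, size v = n -> eval f v (F v).

Lemma comp_ext n f F G : rc n f F -> (forall v, size v = n -> F v = G v) -> rc n f G.
Proof. move=> H E v Hv; rewrite -E //; exact: H. Qed.

Lemma comp_zero n : rc n RZero (fun _ => 0).
Proof. move=> v _; constructor. Qed.
Arguments comp_zero : clear implicits.

Lemma comp_proj n i : i < n -> rc n (RProj i) (fun v => nth 0 v i).
Proof. move=> Hi v Hv; constructor; by rewrite Hv. Qed.

Fixpoint primrec (F G : seq nat -> nat) (m : nat) (w : seq nat) : nat :=
  match m with 0 => F w | m'.+1 => G [:: m', primrec F G m' w & w] end.

Lemma comp_prec n f g F G : rc n f F -> rc n.+2 g G ->
  rc n.+1 (RPrec f g) (fun v => primrec F G (head 0 v) (behead v)).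
Proof.
move=> Hf Hg [|m w] //= [Hw].
elim: m => [|m IH] /=; first by apply: ePrec0; apply Hf.
apply: ePrecS IH _; apply: Hg; by rewrite /= Hw.
Qed.

Lemma comp_min n f F : rc n.+1 f F ->
  (forall v, size v = n -> exists x, F (x :: v) = 0) ->
  exists M, rc n (RMin f) M /\ forall v, size v = n ->
     F (M v :: v) = 0 /\ forall m, m < M v -> F (m :: v) <> 0.
Proof.
move=> Hf Hex.
pose M v := match excluded_middle_informative (exists x, F (x :: v) == 0) with
  | left H => ex_minn H | right _ => 0 end.
have HM : forall v, size v = n -> F (M v :: v) = 0 /\ forall m, m < M v -> F (m :: v) <> 0.
  move=> v Hv; rewrite /M; case: excluded_middle_informative => [H|H].
    case: ex_minnP => x /eqP Hx Hmin; split => // m Hm /eqP Hm0.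
    by move: (Hmin m Hm0); rewrite leqNgt Hm.
  by exfalso; apply: H; case: (Hex v Hv) => x Hx; exists x; apply/eqP.
exists M; split => // v Hv; case: (HM v Hv) => H0 Hlt.
apply: eMin; first by have := Hf (M v :: v); rewrite H0 /= Hv; apply.
move=> m Hm; exists (F (m :: v)).-1; rewrite prednK; first by apply: Hf; rewrite /= Hv.
by rewrite lt0n; apply/eqP; apply: Hlt.
Qed.

Fixpoint allc n (ps : seq (recf * (seq nat -> nat))) : Prop :=
  if ps is p :: ps' then rc n p.1 p.2 /\ allc n ps' else True.

Lemma evals_allc n ps v : allc n ps -> size v = n ->
  evals (map fst ps) v (map (fun p => p.2 v) ps).
Proof.
elim: ps => [|p ps IH] /=; first by constructor.
case=> H1 H2 Hv; constructor; [exact: H1 | exact: IH].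
Qed.

Lemma comp_RComp n m f F ps : rc m f F -> allc n ps -> size ps = m ->
  rc n (RComp f (map fst ps)) (fun v => F (map (fun p => p.2 v) ps)).
Proof.
move=> Hf Hps Hs v Hv; apply: eComp (evals_allc Hps Hv) _; apply: Hf; by rewrite size_map.
Qed.

Lemma comp_C1 n f g F G : rc 1 f F -> rc n g G ->
  rc n (RComp f [:: g]) (fun v => F [:: G v]).
Proof. move=> Hf Hg; exact: (comp_RComp (ps := [:: (g, G)]) Hf). Qed.

Lemma comp_C2 n f g1 g2 F G1 G2 : rc 2 f F -> rc n g1 G1 -> rc n g2 G2 ->
  rc n (RComp f [:: g1; g2]) (fun v => F [:: G1 v; G2 v]).
Proof. move=> Hf H1 H2; exact: (comp_RComp (ps := [:: (g1, G1); (g2, G2)]) Hf). Qed.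

Lemma comp_C3 n f g1 g2 g3 F G1 G2 G3 : rc 3 f F -> rc n g1 G1 -> rc n g2 G2 ->
  rc n g3 G3 ->
  rc n (RComp f [:: g1; g2; g3]) (fun v => F [:: G1 v; G2 v; G3 v]).
Proof. move=> Hf H1 H2 H3; exact: (comp_RComp (ps := [:: (g1, G1); (g2, G2); (g3, G3)]) Hf). Qed.

Fixpoint constf c := if c is c'.+1 then RComp RSucc [:: constf c'] else RZero.
Lemma comp_const n c : rc n (constf c) (fun _ => c).
Proof.
elim: c => [|c IH] /=; first exact: comp_zero.
move=> v Hv; apply: (eComp (ys := [:: c])); last exact: eSucc.
constructor; [exact: IH | constructor].
Qed.
Arguments comp_const : clear implicits.

Definition IFZ := RPrec (RProj 0) (RProj 3).
Lemma comp_IFZ : rc 3 IFZ (fun v => if head 0 v is 0 then nth 0 v 1 else nth 0 v 2).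
Proof.
rewrite /IFZ; eapply comp_ext; first exact: (comp_prec (comp_proj (n:=2) (i:=0) _) (comp_proj (n:=4) (i:=3) _)).
by move=> [|[|c] [|x [|y [|z w]]]].
Qed.

Lemma comp_ifz n f g h F G H : rc n f F -> rc n g G -> rc n h H ->
  rc n (RComp IFZ [:: f; g; h]) (fun v => if F v is 0 then G v else H v).
Proof.
move=> Hf Hg Hh; eapply comp_ext; first exact: (comp_C3 comp_IFZ Hf Hg Hh). by [].
Qed.

Lemma ex_not n f (P : seq nat -> bool) : rc n f (fun v => P v : nat) ->
  exists g, rc n g (fun v => ~~ P v : nat).
Proof.
move=> Hf; exists (RComp IFZ [:: f; constf 1; RZero]); eapply comp_ext; first exact: (comp_ifz Hf (comp_const n 1) (comp_zero n)).
by move=> v _ /=; case: (P v).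
Qed.

Lemma ex_and n f g (P Q : seq nat -> bool) : rc n f (fun v => P v : nat) ->
  rc n g (fun v => Q v : nat) -> exists h, rc n h (fun v => P v && Q v : nat).
Proof.
move=> Hf Hg; exists (RComp IFZ [:: f; RZero; g]); eapply comp_ext; first exact: (comp_ifz Hf (comp_zero n) Hg).
by move=> v _ /=; case: (P v).
Qed.

Lemma ex_or n f g (P Q : seq nat -> bool) : rc n f (fun v => P v : nat) ->
  rc n g (fun v => Q v : nat) -> exists h, rc n h (fun v => P v || Q v : nat).
Proof.
move=> Hf Hg; exists (RComp IFZ [:: f; g; constf 1]); eapply comp_ext; first exact: (comp_ifz Hf Hg (comp_const n 1)).
by move=> v _ /=; case: (P v).
Qed.

Definition PRED := RPrec RZero (RProj 0).
Lemma comp_PRED : rc 1 PRED (fun v => (head 0 v).-1).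
Proof.
rewrite /PRED; eapply comp_ext; first exact: (comp_prec (comp_zero 0) (comp_proj (n:=2) (i:=0) _)).
by move=> [|[|c] [|]].
Qed.

Definition SUB := RPrec (RProj 0) (RComp PRED [:: RProj 1]).
Lemma comp_SUB : rc 2 SUB (fun v => nth 0 v 1 - nth 0 v 0).
Proof.
rewrite /SUB; eapply comp_ext; first exact: (comp_prec (comp_proj (n:=1) (i:=0) _)
   (comp_C1 comp_PRED (comp_proj (n:=3) (i:=1) _))).
move=> [|y [|x [|]]] //= _; elim: y => [|y IH] /=; first by rewrite subn0.
by rewrite IH subnS.
Qed.

Lemma ex_lt n f g F G : rc n f F -> rc n g G ->
  exists h, rc n h (fun v => (F v < G v) : nat).
Proof.
move=> Hf Hg; exists (RComp IFZ [:: RComp SUB [:: f; g]; RZero; constf 1]).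
eapply comp_ext; first exact: (comp_ifz (comp_C2 comp_SUB Hf Hg) (comp_zero n) (comp_const n 1)).
move=> v _ /=; case: (ltnP (F v) (G v)) => H.
  by rewrite -subn_gt0 in H; case: (G v - F v) H.
by rewrite -subn_eq0 in H; rewrite (eqP H).
Qed.

Lemma ex_eq n f g F G : rc n f F -> rc n g G ->
  exists h, rc n h (fun v => (F v == G v) : nat).
Proof.
move=> Hf Hg; case: (ex_lt Hf Hg) => h1 H1; case: (ex_lt Hg Hf) => h2 H2.
case: (ex_or H1 H2) => h3 H3; case: (ex_not H3) => h4 H4; exists h4.
apply: (comp_ext H4) => v _ /=; by case: ltngtP.
Qed.

Lemma evals_proj v s : all (fun i => i < size v) s -> evals (map RProj s) v (map (nth 0 v) s).
Proof.
elim: s => [|i s IH] /=; first by constructor.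
case/andP => H1 H2; constructor; [by constructor | exact: IH].
Qed.

Lemma ex_bex n p (P : seq nat -> bool) : rc n.+1 p (fun v => P v : nat) ->
  exists q, rc n.+1 q (fun v => has (fun z => P (z :: behead v)) (iota 0 (head 0 v)) : nat).
Proof.
move=> Hp.
have Hs : rc n.+2 (RComp p (RProj 0 :: map RProj (iota 2 n)))
            (fun u => P (head 0 u :: drop 2 u) : nat).
  move=> u Hu; apply: (eComp (ys := map (nth 0 u) (0 :: iota 2 n))).
    rewrite -map_cons; apply: evals_proj => /=; rewrite Hu /=; apply/allP => i.
    by rewrite mem_iota => /andP [_]; rewrite add2n.
  suff -> : map (nth 0 u) (0 :: iota 2 n) = head 0 u :: drop 2 u.
    by apply: Hp; rewrite /= size_drop Hu -addn2 addnK.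
  rewrite /=; congr (_ :: _).
  rewrite map_nth_iota; last by rewrite Hu -addn2 addnK.
  by rewrite take_oversize // size_drop Hu -addn2 addnK.
have Hor : exists g, rc n.+2 g (fun u => (nth 0 u 1 != 0) || P (head 0 u :: drop 2 u) : nat).
  have Hr : rc n.+2 (RProj 1) (fun u => nth 0 u 1) := comp_proj (n:=n.+2) (i:=1) erefl.
  exists (RComp IFZ [:: RProj 1; RComp p (RProj 0 :: map RProj (iota 2 n)); constf 1]); eapply comp_ext; first exact: (comp_ifz Hr Hs (comp_const _ 1)).
  by move=> u _ /=; case: (nth 0 u 1).
case: Hor => g Hg; exists (RPrec RZero g); eapply comp_ext; first exact: (comp_prec (comp_zero n) Hg).
move=> [|m w] //= _; elim: m => [|m IH]; first by [].
have -> : iota 0 m.+1 = iota 0 m ++ [:: m] by rewrite -addn1 iotaD.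
rewrite has_cat /= IH drop0 orbF; by case: has.
Qed.

Lemma comp_succ : rc 1 RSucc (fun v => (head 0 v).+1).
Proof. move=> [|x [|y w]] //= _; exact: eSucc. Qed.

Lemma wcode_inj (X : finType) : injective (@wcode X).
Proof.
elim=> [|x s IH] [|y t] //=.
have Hx := ltn_ord (enum_rank x); have Hy := ltn_ord (enum_rank y).
have K0 : 0 < #|X| by apply: leq_ltn_trans Hx.
move=> E0; have E : enum_rank x + #|X| * wcode s = enum_rank y + #|X| * wcode t.
  by move: E0; rewrite !addSn => -[].
have E1 := congr1 (fun n => n %% #|X|) E; have E2 := congr1 (fun n => n %/ #|X|) E.
rewrite ![_ * wcode _]mulnC !(addnC (nat_of_ord _)) !modnMDl ?modn_small // in E1.
rewrite /= ![_ * wcode _]mulnC !(addnC (nat_of_ord _)) !divnMDl // !divn_small // !addn0 in E2.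
by rewrite (IH _ E2) (enum_rank_inj (val_inj E1)).
Qed.

Lemma wcode_surj (X : finType) : 0 < #|X| -> forall n, exists w : seq X, wcode w = n.
Proof.
move=> K0 n; elim: n {-2}n (leqnn n) => [|N IH] n Hn.
  by exists [::]; move: Hn; rewrite leqn0 => /eqP ->.
case: n Hn => [|m] Hm; first by exists [::].
have Hr : m %% #|X| < #|X| by rewrite ltn_pmod.
have [t Ht] : exists t : seq X, wcode t = m %/ #|X|.
  apply: IH; apply: leq_trans (leq_div _ _) _; by rewrite -ltnS.
exists (enum_val (Ordinal Hr) :: t); rewrite /= enum_valK /= Ht.
by rewrite addSn mulnC addnC -divn_eq.
Qed.

Definition asb (P : Prop) : bool := if excluded_middle_informative P then true else false.
Lemma asbP P : reflect P (asb P).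
Proof. rewrite /asb; case: excluded_middle_informative => h; by constructor. Qed.

Lemma sumn_le (T : eqType) (f : T -> nat) s u : u \in s -> f u <= sumn (map f s).
Proof.
elim: s => [|x s IH] //=; rewrite in_cons => /orP [/eqP -> | H]; first exact: leq_addr.
exact: leq_trans (IH H) (leq_addl _ _).
Qed.

Lemma key (X : finType) (L : lang X -> Prop) (C A0 : lang X) :
  0 < #|X| -> nontrivial L -> WP_recursive L -> closed_union L ->
  recursive C -> recursive A0 ->
  (forall w, C w -> A0 w -> False) ->
  ~ (exists Q, L Q /\ (forall w, C w -> ~ Q w) /\ (forall w, A0 w -> Q w)) ->
  exists B : lang X, [/\ (forall w, B w -> A0 w), infinite_lang B, recursive B &
     forall Q, L Q -> (forall w, C w -> ~ Q w) ->
       exists s : seq (seq X), forall w, B w -> Q w -> w \in s].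
Proof.
move=> K0 [L0 LT Lfin] [e [Le esurj [ce Hce]]] Lun [cC HC] [cA HA] CA nosep.
have surj : forall n, exists w : seq X, wcode w == n.
  by move=> n; case: (wcode_surj K0 n) => w Hw; exists w; apply/eqP.
pose dec n := xchoose (surj n).
have decK : forall n, wcode (dec n) = n by move=> n; apply/eqP; exact: (xchooseP (surj n)).
have wK : forall w, dec (wcode w) = w by move=> w; apply: wcode_inj; rewrite decK.
pose pa x := asb (A0 (dec x)). pose pc x := asb (C (dec x)).
pose pe j x := asb (e j (dec x)).
have RA : rc 1 cA (fun v => pa (head 0 v) : nat).
  move=> [|x [|y w]] //= _; have [H1 H2] := HA (dec x); rewrite decK in H1 H2.
  by rewrite /pa; case: asbP => h; [exact: H1 | exact: H2].
have RC : rc 1 cC (fun v => pc (head 0 v) : nat).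
  move=> [|x [|y w]] //= _; have [H1 H2] := HC (dec x); rewrite decK in H1 H2.
  by rewrite /pc; case: asbP => h; [exact: H1 | exact: H2].
have RE : rc 2 ce (fun v => pe (nth 0 v 0) (nth 0 v 1) : nat).
  move=> [|j [|x [|y w]]] //= _; have [H1 H2] := Hce j (dec x); rewrite decK in H1 H2.
  by rewrite /pe; case: asbP => h; [exact: H1 | exact: H2].
have P20 : rc 2 (RProj 0) (fun v => nth 0 v 0) := comp_proj (n:=2) (i:=0) erefl.
have P21 : rc 2 (RProj 1) (fun v => nth 0 v 1) := comp_proj (n:=2) (i:=1) erefl.
have P30 : rc 3 (RProj 0) (fun v => nth 0 v 0) := comp_proj (n:=3) (i:=0) erefl.
have P31 : rc 3 (RProj 1) (fun v => nth 0 v 1) := comp_proj (n:=3) (i:=1) erefl.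
have P32 : rc 3 (RProj 2) (fun v => nth 0 v 2) := comp_proj (n:=3) (i:=2) erefl.
have P10 : rc 1 (RProj 0) (fun v => nth 0 v 0) := comp_proj (n:=1) (i:=0) erefl.
have [f1 F1] : exists f, rc 2 f (fun v => pc (nth 0 v 0) && pe (nth 0 v 1) (nth 0 v 0) : nat).
  apply: ex_and; first exact: (comp_C1 RC P20).
  exact: (comp_C2 RE P21 P20).
pose ce2 j w := has (fun c => pc c && pe j c) (iota 0 w).
have [f2 F2] : exists f, rc 2 f (fun v => ce2 (nth 0 v 1) (nth 0 v 0) : nat).
  have [q Hq] := ex_bex F1; exists q; apply: (comp_ext Hq) => -[|w [|j [|]]] //= _.
pose th j w := ~~ pe j w || ce2 j w.
have [f3 F3] : exists f, rc 2 f (fun v => th (nth 0 v 0) (nth 0 v 1) : nat).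
  have [g1 G1] := ex_not RE.
  have G2 := comp_C2 F2 P21 P20.
  have [g3 G3] := ex_or G1 G2; exists g3; exact: G3.
pose al n w := all (fun j => th j w) (iota 0 n).
have [f4 F4] : exists f, rc 2 f (fun v => al (nth 0 v 0) (nth 0 v 1) : nat).
  have [g1 G1] := ex_not F3.
  have [g2 G2] := ex_bex G1.
  have [g3 G3] := ex_not G2.
  exists g3; apply: (comp_ext G3) => -[|n [|w [|]]] //= _.
  congr (nat_of_bool _); rewrite /al; elim: (iota 0 n) => //= j s IH; by rewrite negb_or negbK IH.
pose ps w n prev := (prev < w) && pa w && al n w.
have [f5 F5] : exists f, rc 3 f (fun v => ~~ ps (nth 0 v 0) (nth 0 v 1) (nth 0 v 2) : nat).
  have [g1 G1] := ex_lt P32 P30.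
  have G2 := comp_C1 RA P30.
  have G3 := comp_C2 F4 P31 P30.
  have [g4 G4] := ex_and G1 G2.
  have [g5 G5] := ex_and G4 G3.
  have [g6 G6] := ex_not G5.
  by exists g6.
pose D j := forall u, C u -> ~ e j u.
have HR : forall n, exists R, L R /\ forall w, R w <-> exists j, j < n /\ D j /\ e j w.
  elim=> [|n [R [LR HR]]].
    by exists (fun _ => False); split => // w; split => // -[j []].
  case: (classic (D n)) => Dn.
    exists (fun w => R w \/ e n w); split; first exact: Lun.
    move=> w; split.
      case=> [/HR [j [Hj [Dj Ej]]] | Ew]; last by exists n.
      by exists j; split => //; apply: ltnW.
    case=> j [Hj [Dj Ej]]; rewrite ltnS leq_eqVlt in Hj.
    case/orP: Hj => [/eqP Hj | Hj]; first by right; rewrite -Hj.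
    by left; apply/HR; exists j.
  exists R; split => // w; split.
    by case/HR => j [Hj [Dj Ej]]; exists j; split => //; apply: ltnW.
  case=> j [Hj [Dj Ej]]; rewrite ltnS leq_eqVlt in Hj.
  case/orP: Hj => [/eqP Hj | Hj]; first by rewrite Hj in Dj.
  by apply/HR; exists j.
have HT : forall n, exists T, forall j, j < n ->
    D j \/ exists c, c < T /\ C (dec c) /\ e j (dec c).
  elim=> [|n [T HT]]; first by exists 0.
  case: (classic (D n)) => Dn.
    exists T => j; rewrite ltnS leq_eqVlt => /orP [/eqP -> | Hj]; [by left | exact: HT].
  have [u [Cu Eu]] : exists u, C u /\ e n u.
    apply: NNPP => Hno; apply: Dn => u Cu Eu; apply: Hno; by exists u.
  exists (maxn T (wcode u).+1) => j; rewrite ltnS leq_eqVlt => /orP [/eqP -> | Hj].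
    right; exists (wcode u); rewrite wK; split => //.
    by rewrite leq_max leqnn orbT.
  case: (HT j Hj) => [Dj | [c [Hc [Cc Ec]]]]; first by left.
  right; exists c; split => //; by rewrite leq_max Hc.
have Hterm : forall n prev, exists x, ps x n prev.
  move=> n prev.
  have [R [LR HRn]] := HR n; have [T HTn] := HT n.
  pose Mx := maxn prev T.
  have [w [Aw [nRw Hw]]] : exists w, A0 w /\ ~ R w /\ Mx < wcode w.
    apply: NNPP => Hno; apply: nosep.
    pose E := [seq u <- map dec (iota 0 Mx.+1) | asb (A0 u)].
    have [LR2 _] := Lfin R LR E.
    exists (fun w => R w \/ w \in E); split => //; split.
      move=> u Cu [/HRn [j [_ [Dj Ej]]] | uE]; first exact: (Dj u Cu Ej).
      by move: uE; rewrite mem_filter => /andP [/asbP Au _]; exact: (CA u Cu Au).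
    move=> u Au; case: (classic (R u)) => Ru; [by left | right].
    have Hu : wcode u <= Mx.
      rewrite leqNgt; apply/negP => Hlt; apply: Hno; exists u; split => //.
    rewrite mem_filter; apply/andP; split; first by apply/asbP.
    by rewrite -(wK u); apply: map_f; rewrite mem_iota add0n ltnS.
  exists (wcode w); rewrite /ps; apply/andP; split; first (apply/andP; split).
  - exact: leq_ltn_trans (leq_maxl prev T) Hw.
  - by rewrite /pa wK; apply/asbP.
  apply/allP => j; rewrite mem_iota add0n => /andP [_ Hj]; rewrite /th.
  case: (HTn j Hj) => [Dj | [c [Hc [Cc Ec]]]].
    apply/orP; left; rewrite /pe wK; apply/negP => /asbP Ej; apply: nRw.
    by apply/HRn; exists j.
  apply/orP; right; apply/hasP; exists c.
    rewrite mem_iota add0n; apply: leq_trans Hc _.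
    exact: ltnW (leq_ltn_trans (leq_maxr prev T) Hw).
  by apply/andP; split; apply/asbP.
have [M [HM HMs]] := comp_min F5 (fun v _ =>
   let: ex_intro x Hx := Hterm (nth 0 v 0) (nth 0 v 1) in
   ex_intro _ x (etrans (congr1 (fun b : bool => b : nat) (congr1 negb Hx)) erefl)).
pose bs m := iteri m (fun n r => M [:: n.+1; r]) (M [:: 0; 0]).
have ps_bs : forall n, ps (bs n) n (if n is m.+1 then bs m else 0).
  case=> [|m].
    have [H0 _] := HMs [:: 0; 0] erefl; move: H0 => /=.
    by case: (ps _ _ _).
  have [H0 _] := HMs [:: m.+1; bs m] erefl; move: H0 => /=.
  by case: (ps _ _ _).
have inc : forall n, n < bs n.
  elim=> [|n IH]; first by have := ps_bs 0; rewrite /ps => /andP [/andP [H _] _].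
  have := ps_bs n.+1; rewrite /ps => /andP [/andP [H _] _]; exact: leq_ltn_trans IH H.
have [fb Fb] : exists f, rc 1 f (fun v => bs (head 0 v)).
  have G0 := comp_C2 HM (comp_zero 0) (comp_zero 0).
  have G1 := comp_C2 HM (comp_C1 comp_succ P20) P21.
  exists (RPrec (RComp (RMin f5) [:: RZero; RZero])
             (RComp (RMin f5) [:: RComp RSucc [:: RProj 0]; RProj 1])).
  apply: (comp_ext (comp_prec G0 G1)) => -[|m [|]] //= _.
  by elim: m => [|m IH] //=; rewrite IH.
have [fB FB] : exists f, rc 1 f (fun v =>
     has (fun z => bs z == head 0 v) (iota 0 (head 0 v)) : nat).
  have [g1 G1] := ex_eq (comp_C1 Fb P20) P21.
  have [g2 G2] := ex_bex G1.
  exists (RComp g2 [:: RProj 0; RProj 0]).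
  by apply: (comp_ext (comp_C2 G2 P10 P10)) => -[|x [|]] //= _.
exists (fun w => has (fun z => bs z == wcode w) (iota 0 (wcode w))).
have Bchar : forall w, (has (fun z => bs z == wcode w) (iota 0 (wcode w))) <->
    exists n, bs n = wcode w.
  move=> w; split; first by case/hasP => n _ /eqP H; exists n.
  move=> [n Hn]; apply/hasP; exists n; last by apply/eqP.
  rewrite mem_iota add0n -Hn; exact: inc.
split.
- move=> w /Bchar [n Hn]; have := ps_bs n; rewrite /ps => /andP [/andP [_ Ha] _].
  by move: Ha; rewrite /pa Hn wK => /asbP.
- move=> s; pose N := sumn (map (@wcode X) s); exists (dec (bs N)); split.
    by apply/Bchar; exists N; rewrite decK.
  apply/negP => Hin; have := sumn_le (@wcode X) Hin; rewrite decK -/N leqNgt inc.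
  by [].
- exists fB => w; have := FB [:: wcode w] erefl; rewrite /=.
  move=> H; split => Hw; first by rewrite Hw in H.
  by move/negP: Hw => /negbTE Hw; rewrite Hw in H.
move=> Q LQ DQ; have [j Ej] := esurj Q LQ; subst Q.
exists (map (fun n => dec (bs n)) (iota 0 j.+1)).
move=> w /Bchar [n Hn] Ew; case: (leqP n j) => Hnj.
  rewrite -(wK w) -Hn; apply: (map_f (fun n => dec (bs n))).
  by rewrite mem_iota add0n ltnS.
exfalso; have := ps_bs n; rewrite /ps => /andP [_ /allP /(_ j)].
rewrite mem_iota add0n Hnj => /(_ erefl) /orP [Hne | Hcw].
  by move: Hne; rewrite /pe Hn wK; case: asbP.
case/hasP: Hcw => c _ /andP [/asbP Cc /asbP Ec]; exact: (DQ _ Cc Ec).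
Qed.

Unset Implicit Arguments. Set Strict Implicit. Set Printing Implicit Defensive.
Theorem theorem5p4 (X : finType) (L : lang X -> Prop) (C : lang X) (k : nat)
  (A : 'I_k -> lang X) :
  0 < #|X| ->
  nontrivial L -> WP_recursive L ->
  closed_union L -> closed_inter L -> closed_compl L ->
  cond_class_problem C A ->
  recursive C ->
  (forall i, recursive (A i)) ->
  (forall i, ~ cclass L C (fun _ : 'I_1 => A i)) ->
  exists B : 'I_k -> lang X,
    [/\ vle B A, ccore L C B & forall i, recursive (B i)].
Proof.
move=> K0 NT WP Lun Lint Lcom [[k1 Adis Ainf] CA] RC RA Hnc.
have Hkey : forall i, exists B : lang X, [/\ (forall w, B w -> A i w), infinite_lang B,
    recursive B & forall Q, L Q -> (forall w, C w -> ~ Q w) ->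
       exists s : seq (seq X), forall w, B w -> Q w -> w \in s].
  move=> i; apply: key => //.
  - by move=> w Cw Aw; exact: (CA i w Cw Aw).
  move=> [Q [LQ [DQ AQ]]]; apply: (Hnc i).
  split.
    split; last by move=> j w Cw Aw; exact: (CA i w Cw Aw).
    split => //.
    move=> j j' Hjj'.
    by exfalso; move: Hjj'; rewrite (ord1 j) (ord1 j') eqxx.
  exists (fun j : 'I_2 => if j == ord0 then (fun w => ~ Q w) else Q); split.
  - split.
    + by move=> j; case: (j == ord0); [apply: Lcom|].
    + move=> j j' Hjj' w; case: (j =P ord0) => [Ej|Ej]; case: (j' =P ord0) => [Ej'|Ej'].
      * by move: Hjj'; rewrite Ej Ej' eqxx.
      * by move=> H1 H2.
      * by move=> H1 H2.
      * have one : forall j : 'I_2, j <> ord0 -> val j = 1.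
          case=> [[|[|a]] Ha] //= H; exfalso; apply: H; exact: val_inj.
        by move: Hjj'; rewrite (_ : j = j') ?eqxx //; apply: val_inj; rewrite !one.
    + move=> w; case: (classic (Q w)) => Hq.
        by exists (lift ord0 ord0).
      by exists ord0.
  - by move=> w Cw /=; apply: DQ.
  - split => //; exists id; split => // j w Aw /=; exact: AQ.
pose B i := proj1_sig (constructive_indefinite_description _ (Hkey i)).
have HB : forall i, let b := B i in [/\ (forall w, b w -> A i w), infinite_lang b,
    recursive b & forall Q, L Q -> (forall w, C w -> ~ Q w) ->
       exists s : seq (seq X), forall w, b w -> Q w -> w \in s].
  move=> i; exact: (proj2_sig (constructive_indefinite_description _ (Hkey i))).
exists B; split.
- split; first by rewrite k1 leqnn.
  by exists id; split => // i w; case: (HB i) => BA _ _ _; apply: BA.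
- split.
    split; last by move=> i w Cw Bw; case: (HB i) => BA _ _ _; exact: (CA i w Cw (BA w Bw)).
    split => // [i j Hij w Bi Bj|i]; last by case: (HB i).
    case: (HB i) => BAi _ _ _; case: (HB j) => BAj _ _ _.
    exact: (Adis i j Hij w (BAi w Bi) (BAj w Bj)).
  move=> m A' [m1 _ A'inf] [_ [s1 [_ Hs1]]] [_ [Q [[LQ Qdis Qcov] CQ [_ [s2 [_ Hs2]]]]]].
  pose i0 : 'I_m := Ordinal m1.
  pose R := Q (lift ord0 (s2 i0)).
  case: (HB (s1 i0)) => _ _ _ /(_ R (LQ _)) [].
    move=> w Cw Rw; apply: (Qdis ord0 (lift ord0 (s2 i0)) _ w (CQ w Cw) Rw).
    exact: neq_lift.
  move=> s Hs; case: (A'inf i0 s) => w [Aw ws].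
  by move: ws; rewrite (Hs w (Hs1 i0 w Aw) (Hs2 i0 w Aw)).
- by move=> i; case: (HB i).
Qed.
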